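(* Let $X,Y\in\mathbb R^{d\times k}$ with $X^\top X=Y^\top Y=I_k$, and let $\theta\in\mathbb R^k$ be the vector of principal angles between their column spans. If $\|\theta\|_\infty\le\frac\pi4$, then $$\frac\pi2\|R_X^{-1}(Y)\|_F\ \ge\ \frac\pi2 d_F(X,Y)\ \ge\ d_A(X,Y)\ \ge\ \frac1{\sqrt2}\|R_X^{-1}(Y)\|_F.$$
   Context: Principal angles: if $X^\top Y=U\cos(\Theta)V^\top$ is a singular value decomposition with $\Theta=\mathrm{diag}(\theta_1,\dots,\theta_k)$, $\theta_i\in[0,\pi/2]$, then $\theta=(\theta_1,\dots,\theta_k)$. The arc-length distance is $d_A(X,Y)=\|\theta\|_2$ and the projection Frobenius distance is $d_F(X,Y)=\|\sin\theta\|_2=2^{-1/2}\|XX^\top-YY^\top\|_F$. For $X^\top Y$ invertible, $R_X^{-1}(Y)=(I-XX^\top)Y(X^\top Y)^{-1}$, the inverse of the retraction $R_X(V)=(X+V)[(X+V)^\top(X+V)]^{-1/2}$ on the Grassmann manifold. *)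

(* Defs.v *)
From mathcomp Require Import all_boot all_order all_algebra.
From mathcomp Require Import all_classical all_reals all_analysis.
Set Implicit Arguments. Unset Strict Implicit. Unset Printing Implicit Defensive.
Import Order.TTheory GRing.Theory Num.Theory.
Local Open Scope ring_scope.

Section Defs.
Variable R : realType.

Definition frob_norm (m n : nat) (A : 'M[R]_(m, n)) : R :=
  Num.sqrt (\sum_(i < m) \sum_(j < n) A i j ^+ 2).

Definition principal_angles (d k : nat) (X Y : 'M[R]_(d, k)) (theta : 'rV[R]_k) : Prop :=
  (forall i, 0 <= theta 0 i <= pi / 2) /\
  exists U V : 'M[R]_k,
    U^T *m U = 1%:M /\ V^T *m V = 1%:M /\
    X^T *m Y = U *m diag_mx (map_mx cos theta) *m V^T.

(* arc-length distance d_A = ||theta||_2 *)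
Definition dist_arc (k : nat) (theta : 'rV[R]_k) : R :=
  Num.sqrt (\sum_(i < k) theta 0 i ^+ 2).

(* projection Frobenius distance d_F = ||sin theta||_2 *)
Definition dist_projF (k : nat) (theta : 'rV[R]_k) : R :=
  Num.sqrt (\sum_(i < k) sin (theta 0 i) ^+ 2).

Definition inv_retr (d k : nat) (X Y : 'M[R]_(d, k)) : 'M[R]_(d, k) :=
  (1%:M - X *m X^T) *m Y *m invmx (X^T *m Y).

End Defs.

(* Main.v *)
Require Import Defs.
From mathcomp Require Import all_boot all_order all_algebra.
From mathcomp Require Import all_classical all_reals all_analysis.
From mathcomp Require Import ring lra.
Import Order.TTheory GRing.Theory Num.Theory.
Import numFieldNormedType.Exports.
Local Open Scope ring_scope.

Section Trig.
Context {R : realType}.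

Lemma sin_le_id (x : R) : 0 <= x -> sin x <= x.
Proof.
move=> x0.
have [|c _ h] := @MVT_segment _ sin cos _ _ x0.
  exact/continuous_subspaceT/continuous_sin.
rewrite sin0 !subr0 in h; rewrite h -[leRHS]mul1r ler_wpM2r // cos_le1.
Qed.

Lemma cos_le_mono (x y : R) : 0 <= x -> x <= y -> y <= pi -> cos y <= cos x.
Proof.
move=> x0 xy ypi.
have hx : x \in `[0, pi] by rewrite in_itv /= x0 (le_trans xy ypi).
have hy : y \in `[0, pi] by rewrite in_itv /= ypi (le_trans x0 xy).
by rewrite leNgt (ltr_cos hy hx) -leNgt.
Qed.

Lemma sin_ge_xcos (x : R) : 0 <= x <= pi -> x * cos x <= sin x.
Proof.
move=> /andP[x0 xpi].
have [|c hc h] := @MVT_segment _ sin cos _ _ x0.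
  exact/continuous_subspaceT/continuous_sin.
rewrite sin0 !subr0 in h; rewrite h mulrC ler_wpM2r //.
move: hc; rewrite in_itv /= => /andP[c0 cx].
exact: cos_le_mono.
Qed.

Lemma cos_pi4_sq : cos (pi / 4) ^+ 2 = 1 / 2 :> R.
Proof.
have c0 : 0 < cos (pi / 4 : R).
  apply: cos_gt0_pihalf; have := @pi_gt0 R; lra.
have t := tan_piquarter R; rewrite /tan in t.
have e : sin (pi / 4 : R) = cos (pi / 4).
  by rewrite -(divfK (lt0r_neq0 c0) (sin (pi / 4))) t mul1r.
have := cos2Dsin2 (pi / 4 : R); rewrite e => h.
lra.
Qed.

Lemma cos_pi4_gt0 : 0 < cos (pi / 4 : R).
Proof. apply: cos_gt0_pihalf; have := @pi_gt0 R; lra. Qed.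

Lemma cos_pi4_le : cos (pi / 4) <= pi / 4 :> R.
Proof.
have c0 := cos_pi4_gt0.
have t := tan_piquarter R; rewrite /tan in t.
have e : sin (pi / 4 : R) = cos (pi / 4).
  by rewrite -(divfK (lt0r_neq0 c0) (sin (pi / 4))) t mul1r.
rewrite -e; apply: sin_le_id; have := @pi_gt0 R; lra.
Qed.

Lemma term_facts (t : R) : 0 <= t <= pi / 4 ->
  [/\ 0 < cos t, 1 / 2 <= cos t ^+ 2, t <= pi / 2 * sin t & sin t ^+ 2 <= t ^+ 2].
Proof.
move=> /andP[t0 t4].
have pi0 := @pi_gt0 R.
have c4 := cos_pi4_gt0; have c4sq := cos_pi4_sq; have c4le := cos_pi4_le.
have cc : cos (pi / 4) <= cos t by apply: cos_le_mono => //; lra.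
have sl := @sin_le_id t t0.
have sg : t * cos t <= sin t by apply: sin_ge_xcos; lra.
have cpos : 0 < cos t by lra.
have c2 : 1 / 2 <= cos t ^+ 2.
  rewrite -c4sq; rewrite !expr2; nra.
split; [exact: cpos | exact: c2 | | ].
{ have h1 : t * cos (pi / 4) <= sin t.
    apply: le_trans _ sg; by apply: ler_wpM2l.
  have h2 : pi / 2 * (t * cos (pi / 4)) <= pi / 2 * sin t.
    by apply: ler_wpM2l => //; lra.
  have h3 : (2 * cos (pi / 4)) * (t * cos (pi / 4)) <= pi / 2 * (t * cos (pi / 4)).
    by apply: ler_wpM2r; [apply: mulr_ge0 => //; lra | lra].
  have h4 : (2 * cos (pi / 4)) * (t * cos (pi / 4)) = t.
    have -> : (2 * cos (pi / 4)) * (t * cos (pi / 4)) = t * (2 * cos (pi / 4) ^+ 2) by ring.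
    by rewrite c4sq; field.
  lra. }
{ have s0 : 0 <= sin t by apply: sin_ge0_pi; lra.
  nra. }
Qed.
End Trig.

Section Mx.
Context {R : realType}.

Lemma frob_tr m n (A : 'M[R]_(m, n)) :
  \sum_(i < m) \sum_(j < n) A i j ^+ 2 = \tr (A^T *m A).
Proof.
rewrite /mxtrace exchange_big; apply: eq_bigr => j _; rewrite !mxE.
by apply: eq_bigr => i _; rewrite !mxE expr2.
Qed.

Lemma inv_retr_tr {d k} {X Y : 'M[R]_(d, k)} {U V : 'M[R]_k} {c : 'rV[R]_k} :
  X^T *m X = 1%:M -> Y^T *m Y = 1%:M -> U^T *m U = 1%:M -> V^T *m V = 1%:M ->
  (forall i, c 0 i != 0) ->
  X^T *m Y = U *m diag_mx c *m V^T ->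
  \tr ((inv_retr X Y)^T *m inv_retr X Y) = \sum_i ((c 0 i)^-2 - 1).
Proof.
move=> hX hY hU hV hc hA.
pose ci : 'rV[R]_k := \row_i (c 0 i)^-1.
pose B := V *m diag_mx ci *m U^T.
have UUt : U *m U^T = 1%:M := mulmx1C hU.
have cci : diag_mx c *m diag_mx ci = 1%:M.
  apply/matrixP => i j; rewrite mul_diag_mx !mxE.
  case: (eqVneq i j) => [->|ne]; last by rewrite !mulr0n mulr0.
  by rewrite !mulr1n mulfV.
have AB : X^T *m Y *m B = 1%:M.
  rewrite hA /B !mulmxA -[U *m diag_mx c *m V^T *m V]mulmxA hV mulmx1.
  by rewrite -[U *m diag_mx c *m diag_mx ci]mulmxA cci mulmx1 UUt.
have Au : X^T *m Y \in unitmx := (mulmx1_unit AB).1.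
have invA : invmx (X^T *m Y) = B by rewrite -(mulKmx Au B) AB mulmx1.
rewrite /inv_retr invA.
set P := 1%:M - X *m X^T.
have PT : P^T = P by rewrite /P linearB /= trmx1 trmx_mul trmxK.
have PP : P^T *m P = P.
  rewrite PT /P mulmxBl mul1mx mulmxBr mulmx1 !mulmxA.
  by rewrite -[X *m X^T *m X]mulmxA hX mulmx1 subrr subr0.
have YPY : Y^T *m P^T *m (P *m Y) = 1%:M - (X^T *m Y)^T *m (X^T *m Y).
  have -> : Y^T *m P^T *m (P *m Y) = Y^T *m (P^T *m P) *m Y by rewrite !mulmxA.
  rewrite PP /P mulmxBr mulmx1 mulmxBl hY.
  by rewrite trmx_mul trmxK !mulmxA.
have E : (P *m Y *m B)^T *m (P *m Y *m B) = B^T *m B - 1%:M.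
  have -> : (P *m Y *m B)^T *m (P *m Y *m B)
      = B^T *m (Y^T *m P^T *m (P *m Y)) *m B by rewrite !trmx_mul !mulmxA.
  rewrite YPY mulmxBr mulmx1 mulmxBl.
  have -> : B^T *m ((X^T *m Y)^T *m (X^T *m Y)) *m B
      = (X^T *m Y *m B)^T *m (X^T *m Y *m B) by rewrite !trmx_mul !mulmxA.
  by rewrite AB trmx1 mulmx1.
rewrite E linearB /= mxtrace1.
have -> : B^T *m B = U *m (diag_mx ci *m diag_mx ci) *m U^T.
  rewrite /B !trmx_mul trmxK tr_diag_mx !mulmxA.
  by rewrite -[U *m diag_mx ci *m V^T *m V]mulmxA hV mulmx1.
rewrite mxtrace_mulC !mulmxA hU mul1mx.
rewrite sumrB sumr_const card_ord.
congr (_ - _).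
rewrite /mxtrace; apply: eq_bigr => i _.
by rewrite mul_diag_mx !mxE eqxx mulr1n -exprVn expr2.
Qed.
End Mx.

Theorem lemma9 (R : realType) (d k : nat) (X Y : 'M[R]_(d, k)) (theta : 'rV[R]_k) :
  X^T *m X = 1%:M -> Y^T *m Y = 1%:M ->
  principal_angles X Y theta ->
  (forall i, `|theta 0 i| <= pi / 4) ->
  [/\ pi / 2 * frob_norm (inv_retr X Y) >= pi / 2 * dist_projF theta,
      pi / 2 * dist_projF theta >= dist_arc theta
    & dist_arc theta >= frob_norm (inv_retr X Y) / Num.sqrt 2].
Proof.
move=> hX hY [hth [U [V [hU [hV hA]]]]] hb.
have ht i : 0 <= theta 0 i <= pi / 4.
  have /andP[t0 _] := hth i; rewrite t0 /=.
  by move: (hb i); rewrite ger0_norm.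
have hc i : map_mx cos theta 0 i != 0.
  by rewrite mxE; have [+ _ _ _] := term_facts _ (ht i) => /lt0r_neq0.
have F : frob_norm (inv_retr X Y) = Num.sqrt (\sum_i ((cos (theta 0 i))^-2 - 1)).
  rewrite /frob_norm frob_tr (inv_retr_tr hX hY hU hV hc hA); congr Num.sqrt.
  by apply: eq_bigr => i _; rewrite mxE.
rewrite F /dist_projF /dist_arc.
have pi0 := @pi_gt0 R.
have E i : (cos (theta 0 i))^-2 - 1 = sin (theta 0 i) ^+ 2 / cos (theta 0 i) ^+ 2.
  have [cp _ _ _] := term_facts _ (ht i).
  have cn : cos (theta 0 i) != 0 by exact: lt0r_neq0.
  by rewrite sin2cos2; field.
have P1 i : sin (theta 0 i) ^+ 2 <= (cos (theta 0 i))^-2 - 1.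
  have [cp c2 tl st] := term_facts _ (ht i).
  rewrite E ler_pdivlMr ?exprn_gt0 //.
  have := cos2Dsin2 (theta 0 i); nra.
have P2 i : (cos (theta 0 i))^-2 - 1 <= theta 0 i ^+ 2 * 2.
  have [cp c2 tl st] := term_facts _ (ht i).
  rewrite E ler_pdivrMr ?exprn_gt0 //.
  have h : 0 <= theta 0 i ^+ 2 * (2 * cos (theta 0 i) ^+ 2 - 1).
    by apply: mulr_ge0; [exact: sqr_ge0 | lra].
  nra.
have P3 i : theta 0 i ^+ 2 <= (pi / 2) ^+ 2 * sin (theta 0 i) ^+ 2.
  have [cp c2 tl st] := term_facts _ (ht i).
  have /andP[t0 _] := ht i.
  rewrite -exprMn; nra.
have S0 : 0 <= \sum_i sin (theta 0 i) ^+ 2 by apply: sumr_ge0 => i _; exact: sqr_ge0.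
have T0 : 0 <= \sum_i theta 0 i ^+ 2 by apply: sumr_ge0 => i _; exact: sqr_ge0.
have A0 : 0 <= \sum_i ((cos (theta 0 i))^-2 - 1).
  by apply: sumr_ge0 => i _; exact: le_trans (sqr_ge0 _) (P1 i).
split.
- apply: ler_wpM2l; first lra.
  by rewrite ler_sqrt //; apply: ler_sum => i _; exact: P1.
- have -> : pi / 2 = Num.sqrt ((pi / 2) ^+ 2 :> R).
    by rewrite sqrtr_sqr ger0_norm //; lra.
  rewrite -sqrtrM ?sqr_ge0 // ler_sqrt; last by apply: mulr_ge0 => //; exact: sqr_ge0.
  by rewrite mulr_sumr; apply: ler_sum => i _; exact: P3.
- rewrite ler_pdivrMr ?sqrtr_gt0 ?ltr0n // -sqrtrM // ler_sqrt; last by apply: mulr_ge0.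
  by rewrite mulr_suml; apply: ler_sum => i _; exact: P2.
Qed.
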